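(* Let $G$ be a nice graph with no two adjacent vertices of the same degree. If $\chi'_{qm}(G)=2$, then $\chi'_{qm\Sigma}(G)=2$.
   Context: All graphs are simple and finite. A $k$-edge-coloring of $G$ is any map $c:E(G)\to\{1,\dots,k\}$ (adjacent edges may share colors). It induces $\sigma_c(v)=\sum_{u\in N(v)}c(vu)$. The coloring is neighbor sum distinguishing (NSD) if $\sigma_c(u)\ne\sigma_c(v)$ for every edge $uv$. It is quasi-majority if every vertex $v$ is incident to at most $\lceil d(v)/2\rceil$ edges of each single color. $\chi'_{qm}(G)$ is the least $k$ such that $G$ has a quasi-majority $k$-edge-coloring, and $\chi'_{qm\Sigma}(G)$ the least $k$ such that $G$ has a $k$-edge-coloring that is both quasi-majority and NSD. A graph is nice if it has no connected component isomorphic to $K_2$. *)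

(* Defs.v *)
(* An edge-colouring is represented by c : T -> T -> nat,
   read on edges only, required to be symmetric on edges (so it is a map on
   unordered edges) with values in {1,...,k}. *)
From mathcomp Require Import all_boot.
Set Implicit Arguments. Unset Strict Implicit. Unset Printing Implicit Defensive.

Section Graphs.
Variables (T : finType) (e : rel T).

Definition simple_graph := symmetric e /\ irreflexive e.

Definition deg (v : T) : nat := #|[set u | e v u]|.

(* no connected component isomorphic to K2 *)
Definition nice : Prop :=
  ~ exists u v, e u v /\ [set w | connect e u w] = [set u; v].

Definition no_adj_same_degree : Prop :=
  forall u v, e u v -> deg u <> deg v.

Definition edge_coloring (k : nat) (c : T -> T -> nat) : Prop :=
  forall u v, e u v -> c u v = c v u /\ 1 <= c u v <= k.

Definition sigma (c : T -> T -> nat) (v : T) : nat := \sum_(u | e v u) c v u.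

Definition nsd (c : T -> T -> nat) : Prop :=
  forall u v, e u v -> sigma c u <> sigma c v.

Definition quasi_majority (c : T -> T -> nat) : Prop :=
  forall v (col : nat), #|[set u | e v u && (c v u == col)]| <= uphalf (deg v).

Definition has_qm (k : nat) : Prop :=
  exists c, edge_coloring k c /\ quasi_majority c.

Definition has_qmS (k : nat) : Prop :=
  exists c, edge_coloring k c /\ quasi_majority c /\ nsd c.

Definition chi_qm_eq (k : nat) : Prop :=
  has_qm k /\ forall j, j < k -> ~ has_qm j.

Definition chi_qmS_eq (k : nat) : Prop :=
  has_qmS k /\ forall j, j < k -> ~ has_qmS j.

End Graphs.

(* Main.v *)
Require Import Defs.
From mathcomp Require Import all_boot.
From mathcomp Require Import zify.

Lemma card_pred_sum (T : finType) (P : pred T) :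
  #|[set u | P u]| = \sum_(u | P u) 1.
Proof. by rewrite sum1_card cardsE. Qed.

Lemma sigma_bounds (T : finType) (e : rel T) (c : T -> T -> nat) (v : T) :
  edge_coloring e 2 c -> quasi_majority e c ->
  3 * deg e v <= (sigma e c v).*2 + 1 /\ (sigma e c v).*2 <= 3 * deg e v + 1.
Proof.
move=> Hc Hq.
set n1 := #|[set u | e v u && (c v u == 1)]|.
set n2 := #|[set u | e v u && (c v u == 2)]|.
have Hs : sigma e c v = deg e v + n2.
  rewrite /sigma /deg /n2 !card_pred_sum.
  rewrite big_mkcondr /= -big_split /=.
  apply: eq_bigr => u Hu; have [_] := Hc _ _ Hu.
  case: (c v u) => [|[|[|k]]] //=.
have Hd : deg e v = n1 + n2.
  rewrite /deg /n1 /n2 !card_pred_sum.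
  rewrite !big_mkcondr /= -big_split /=.
  apply: eq_bigr => u Hu; have [_] := Hc _ _ Hu.
  case: (c v u) => [|[|[|k]]] //=.
have H1 := Hq v 1; have H2 := Hq v 2.
rewrite -/n1 in H1; rewrite -/n2 in H2.
move: H1 H2; rewrite Hs uphalf_half.
have := odd_double_half (deg e v).
rewrite -!muln2.
case: (odd (deg e v)) => /=; lia.
Qed.

Theorem mainTheorem16 (T : finType) (e : rel T) :
  simple_graph e -> nice e -> no_adj_same_degree e ->
  chi_qm_eq e 2 -> chi_qmS_eq e 2.
Proof.
move=> _ _ Hdeg [[c [Hc Hq]] Hmin]; split.
  exists c; split => //; split => //.
  move=> u v Huv Hs.
  have [a1 a2] := @sigma_bounds _ e c v Hc Hq.
  have [b1 b2] := @sigma_bounds _ e c u Hc Hq.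
  have := Hdeg _ _ Huv; rewrite Hs in b1 b2.
  move: a1 a2 b1 b2; rewrite -!muln2; lia.
move=> j Hj [c' [Hc' [Hq' _]]]; apply: (Hmin j Hj); by exists c'.
Qed.
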